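(* (Positive/negative transfer for large first task.) Fix $\rho$ and $N_B$. Then \[ \lim_{N_A\to\infty}E_{A\to B}(\rho)=2(1-\rho)E_B, \] so for $N_A\gg N_B$, $E_{A\to B}(\rho)<E_B$ when $\rho>1/2$ and $E_{A\to B}(\rho)>E_B$ when $\rho<1/2$.
   Context: $\eta_i\ge0$, $\sum_i\eta_i<\infty$, infinitely many $\eta_i>0$. For sample size $N$: $\kappa>0$ solves $1=\sum_i\eta_i/(\kappa+N\eta_i)$, $\gamma=\sum_iN\eta_i^2/(\kappa+N\eta_i)^2$, $q_i=\kappa/(\kappa+N\eta_i)$; subscripts $A,B$ mean $N=N_A,N_B$. $E_{B,i}=q_{B,i}^2\eta_i^2/(1-\gamma_B)$, $E_B=\sum_iE_{B,i}$, and $E_{A\to B}(\rho)=\sum_i[2(1-\rho)(1-q_{A,i})+q_{A,i}^2/(1-\gamma_A)]E_{B,i}$ (replica-method error on task B after sequential training A→B in the noise-free case). *)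

(* Defs.v *)
From Stdlib Require Import Reals.
From Coquelicot Require Import Coquelicot.
Open Scope R_scope.

Definition eta_ok (eta : nat -> R) : Prop :=
  (forall i, 0 <= eta i) /\ ex_series eta /\
  (forall n, exists i, (n <= i)%nat /\ 0 < eta i).

Definition kappa_solves (eta : nat -> R) (N k : R) : Prop :=
  0 < k /\ is_series (fun i => eta i / (k + N * eta i)) 1.

Definition gamma (eta : nat -> R) (N k : R) : R :=
  Series (fun i => N * (eta i)^2 / (k + N * eta i)^2).

Definition qcoef (eta : nat -> R) (N k : R) (i : nat) : R :=
  k / (k + N * eta i).

Definition EBi (eta : nat -> R) (NB kB : R) (i : nat) : R :=
  (qcoef eta NB kB i)^2 * (eta i)^2 / (1 - gamma eta NB kB).

Definition EB (eta : nat -> R) (NB kB : R) : R :=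
  Series (EBi eta NB kB).

Definition EAB (eta : nat -> R) (rho NA kA NB kB : R) : R :=
  Series (fun i =>
    (2 * (1 - rho) * (1 - qcoef eta NA kA i)
     + (qcoef eta NA kA i)^2 / (1 - gamma eta NA kA)) * EBi eta NB kB i).

(* Main.v *)
Require Import Defs.
From Stdlib Require Import Reals Lra Psatz.
From Coquelicot Require Import Coquelicot.
Open Scope R_scope.

Lemma Series_nonneg (a : nat -> R) : (forall n, 0 <= a n) -> ex_series a -> 0 <= Series a.
Proof.
  intros H E.
  assert (Z : Series (fun _ => 0) = 0).
  { rewrite (Series_ext _ (fun n => 0 * a n)) by (intros; ring).
    rewrite Series_scal_l; ring. }
  rewrite <- Z. apply Series_le; auto. intros; split; auto; lra.
Qed.

Lemma term_le_Series (a : nat -> R) i : (forall n, 0 <= a n) -> ex_series a -> a i <= Series a.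
Proof.
  intros H E.
  rewrite (Series_incr_n a (S i)); [| lia | exact E]. simpl pred.
  assert (0 <= Series (fun k => a (S i + k)%nat)).
  { apply Series_nonneg; auto. now apply ex_series_incr_n. }
  revert H0. generalize (Series (fun k => a (S i + k)%nat)). intros T HT.
  destruct i; simpl. lra.
  pose proof (cond_pos_sum a i H). lra.
Qed.

Lemma sum_le_const (a : nat -> R) b n : (forall i, a i <= b) -> sum_f_R0 a n <= INR (S n) * b.
Proof.
  intros H. induction n; simpl.
  - specialize (H 0%nat). lra.
  - rewrite S_INR in *. specialize (H (S n)). destruct n; simpl in *; lra.
Qed.

Lemma ex_series_le_R (a b : nat -> R) : (forall n, 0 <= a n <= b n) -> ex_series b -> ex_series a.
Proof.
  intros H E. apply (ex_series_le a b); auto.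
  intros n. specialize (H n). unfold norm; simpl. unfold abs; simpl.
  rewrite Rabs_pos_eq; lra.
Qed.

Lemma ex_series_scal_R c (a : nat -> R) : ex_series a -> ex_series (fun n => c * a n).
Proof. intros E. apply (ex_series_scal_l c a E). Qed.

Lemma ex_series_minus_R (a b : nat -> R) : ex_series a -> ex_series b -> ex_series (fun n => a n - b n).
Proof. intros Ea Eb. apply (ex_series_minus a b Ea Eb). Qed.

Lemma ex_series_plus_R (a b : nat -> R) : ex_series a -> ex_series b -> ex_series (fun n => a n + b n).
Proof. intros Ea Eb. apply (ex_series_plus a b Ea Eb). Qed.

Lemma gamma_facts (eta : nat -> R) N k :
  (forall i, 0 <= eta i) -> (exists i, 0 < eta i) -> 0 <= N -> 0 < k ->
  is_series (fun i => eta i / (k + N * eta i)) 1 ->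
  let h := fun i => eta i / (k + N * eta i)^2 in
  ex_series h /\ 0 < Series h /\ 1 - gamma eta N k = k * Series h
  /\ ex_series (fun i => N * (eta i)^2 / (k + N * eta i)^2).
Proof.
  intros Heta [i0 Hi0] HN Hk Hf h.
  set (f := fun i => eta i / (k + N * eta i)).
  set (g := fun i => N * (eta i)^2 / (k + N * eta i)^2).
  assert (Hd : forall i, 0 < k + N * eta i).
  { intros i. specialize (Heta i). nra. }
  assert (Hfg : forall i, f i = g i + k * h i).
  { intros i; unfold f, g, h. specialize (Hd i). field. lra. }
  assert (Hg : forall i, 0 <= g i <= f i).
  { intros i. unfold f, g. specialize (Hd i). specialize (Heta i).
    assert (E : N * eta i ^ 2 / (k + N * eta i) ^ 2 = (eta i / (k + N*eta i)) * (N * eta i / (k + N * eta i))) by (field; lra).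
    rewrite E.
    assert (0 <= eta i / (k + N*eta i)) by (apply Rdiv_le_0_compat; lra).
    assert (0 <= N * eta i / (k + N*eta i)) by (apply Rdiv_le_0_compat; nra).
    assert (N * eta i / (k + N*eta i) <= 1) by (apply Rle_div_l; lra).
    split; nra. }
  assert (Ef : ex_series f) by (exists 1; exact Hf).
  assert (Eg : ex_series g) by (apply (ex_series_le_R g f); auto).
  assert (Hh : forall i, h i = / k * (f i - g i)).
  { intros i. rewrite Hfg. field. lra. }
  assert (Eh : ex_series h).
  { apply (ex_series_ext (fun i => / k * (f i - g i))). intros; now rewrite Hh.
    apply ex_series_scal_R. apply ex_series_minus_R; auto. }
  assert (Sh : k * Series h = 1 - Series g).
  { rewrite (Series_ext h (fun i => / k * (f i - g i))) by exact Hh.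
    rewrite Series_scal_l, Series_minus by auto.
    rewrite (is_series_unique f 1 Hf). field. lra. }
  assert (hpos : forall i, 0 <= h i).
  { intros i; unfold h. apply Rdiv_le_0_compat; auto. specialize (Hd i). nra. }
  assert (0 < h i0).
  { unfold h. apply Rdiv_lt_0_compat; auto. specialize (Hd i0). nra. }
  pose proof (term_le_Series h i0 hpos Eh).
  split; [exact Eh|split; [lra|split; [unfold gamma; fold g; lra|exact Eg]]].
Qed.

Lemma dom (a b : nat -> R) L : (forall n, 0 <= a n <= b n) -> is_series b L ->
  ex_series a /\ 0 <= Series a <= L.
Proof.
  intros H Hb. assert (Eb : ex_series b) by (exists L; auto).
  assert (Ea : ex_series a) by (apply (ex_series_le_R a b); auto).
  split; auto. split. apply Series_nonneg; auto. intros n; apply H.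
  rewrite <- (is_series_unique b L Hb). apply Series_le; auto.
Qed.

Lemma is_series_scal_R c (a : nat -> R) L : is_series a L -> is_series (fun n => c * a n) (c * L).
Proof. intros H. apply (is_series_scal_l c a L H). Qed.

Lemma bounds (eta : nat -> R) N k (w : nat -> R) c :
  (forall i, 0 <= eta i) -> (exists i, 0 < eta i) -> 0 <= N -> 0 < k ->
  is_series (fun i => eta i / (k + N * eta i)) 1 ->
  0 <= c -> (forall i, 0 <= w i <= c * eta i) ->
  0 < 1 - gamma eta N k /\
  (ex_series (fun i => qcoef eta N k i * w i) /\
     0 <= Series (fun i => qcoef eta N k i * w i) <= c * k) /\
  (ex_series (fun i => (qcoef eta N k i)^2 / (1 - gamma eta N k) * w i) /\
     0 <= Series (fun i => (qcoef eta N k i)^2 / (1 - gamma eta N k) * w i) <= c * k) /\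
  (forall i, 0 <= qcoef eta N k i <= 1) /\
  (forall i, 0 <= (qcoef eta N k i)^2 / (1 - gamma eta N k)).
Proof.
  intros Heta Hex HN Hk Hf Hc Hw.
  destruct (gamma_facts eta N k Heta Hex HN Hk Hf) as [Eh [Sh [Hg _]]].
  set (S := Series (fun i => eta i / (k + N * eta i) ^ 2)) in *.
  assert (Hd : forall i, 0 < k + N * eta i).
  { intros i. specialize (Heta i). nra. }
  assert (G : 0 < 1 - gamma eta N k) by (rewrite Hg; nra).
  assert (Hq : forall i, 0 <= qcoef eta N k i <= 1).
  { intros i; unfold qcoef. specialize (Hd i). specialize (Heta i). split.
    apply Rdiv_le_0_compat; lra. apply Rle_div_l; nra. }
  split; [exact G|]. split; [|split; [|split; [exact Hq|]]].
  - apply (dom _ (fun i => (c * k) * (eta i / (k + N * eta i)))).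
    + intros i. specialize (Hq i). specialize (Hw i). split. nra.
      unfold qcoef. specialize (Hd i).
      assert (E : c * k * (eta i / (k + N * eta i)) = (k / (k + N*eta i)) * (c * eta i)) by (field; lra).
      rewrite E. unfold qcoef in Hq. nra.
    + pose proof (is_series_scal_R (c*k) _ 1 Hf) as HH. rewrite Rmult_1_r in HH. exact HH.
  - apply (dom _ (fun i => (c * k / S) * (eta i / (k + N * eta i)^2))).
    + intros i. specialize (Hq i). specialize (Hw i). specialize (Hd i).
      assert (0 <= qcoef eta N k i ^ 2 / (1 - gamma eta N k)).
      { apply Rdiv_le_0_compat; nra. }
      split. nra.
      assert (E : c * k / S * (eta i / (k + N * eta i) ^ 2) =
                  qcoef eta N k i ^ 2 / (1 - gamma eta N k) * (c * eta i)).
      { rewrite Hg. unfold qcoef. field. split; lra. }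
      rewrite E. nra.
    + pose proof (is_series_scal_R (c*k/S) _ _ (Series_correct _ Eh)) as HH.
      fold S in HH. replace (c * k / S * S) with (c*k) in HH by (field; lra). exact HH.
  - intros i. apply Rdiv_le_0_compat; nra.
Qed.

Lemma kappa_small (eta : nat -> R) (kappa : nat -> R) :
  eta_ok eta -> (forall N : nat, kappa_solves eta (INR N) (kappa N)) ->
  forall eps, 0 < eps -> exists N0, forall N, (N0 <= N)%nat -> kappa N <= eps.
Proof.
  intros [Heta [Ee Hinf]] Hk eps Heps.
  pose proof (Series_correct _ Ee) as Hse.
  apply is_series_Reals in Hse.
  destruct (Hse (eps/2)) as [M0 HM0]; [lra|].
  specialize (HM0 M0 (le_n _)). unfold R_dist in HM0.
  set (M := S M0).
  pose proof (Series_incr_n eta M ltac:(unfold M; lia) Ee) as HT.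
  simpl pred in HT.
  set (T := Series (fun j => eta (M + j)%nat)) in *.
  assert (HTe : T < eps / 2).
  { rewrite Rabs_minus_sym in HM0. pose proof (Rle_abs (Series eta - sum_f_R0 eta M0)). lra. }
  exists (S (2 * M)). intros N HN.
  destruct (Hk N) as [Hkp Hf].
  set (n := INR N) in *. set (k := kappa N) in *.
  assert (Hn : 2 * INR M + 1 <= n).
  { unfold n. replace (2 * INR M + 1) with (INR (S (2*M))). apply le_INR; auto.
    rewrite S_INR, mult_INR. simpl. ring. }
  assert (HM : 0 <= INR M) by apply pos_INR.
  set (f := fun i => eta i / (k + n * eta i)).
  assert (Ef : ex_series f) by (exists 1; exact Hf).
  pose proof (Series_incr_n f M ltac:(unfold M; lia) Ef) as HF.
  simpl pred in HF. unfold f at 1 in HF. rewrite (is_series_unique _ _ Hf) in HF.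
  assert (Hd : forall i, 0 < k + n * eta i).
  { intros i. specialize (Heta i). nra. }
  assert (H1 : sum_f_R0 f M0 <= INR M * (1 / n)).
  { apply sum_le_const. intros i. unfold f. apply Rle_div_l. apply Hd.
    specialize (Heta i).
    replace (1 / n * (k + n * eta i)) with (k / n + eta i) by (field; lra).
    assert (0 < k / n) by (apply Rdiv_lt_0_compat; lra). lra. }
  assert (H2 : Series (fun j => f (M + j)%nat) <= / k * T).
  { unfold T. rewrite <- Series_scal_l. apply Series_le.
    - intros j. unfold f. specialize (Heta (M+j)%nat). specialize (Hd (M+j)%nat).
      split. apply Rdiv_le_0_compat; lra.
      unfold Rdiv. rewrite Rmult_comm. apply Rmult_le_compat_r; auto.
      apply Rinv_le_contravar; auto. nra.
    - apply ex_series_scal_R. now apply ex_series_incr_n. }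
  assert (H3 : INR M * (1 / n) <= 1/2).
  {
    replace (INR M * (1 / n)) with (INR M / n) by (field; lra).
    apply Rle_div_l; lra. }
  assert (H4 : 1/2 <= / k * T) by lra.
  assert (k * (/ k * T) = T) by (field; lra).
  nra.
Qed.

Lemma err_bound (eta : nat -> R) (kappa : nat -> R) (rho : R) (NB : nat) :
  eta_ok eta -> (forall N : nat, kappa_solves eta (INR N) (kappa N)) ->
  0 < EB eta (INR NB) (kappa NB) /\
  exists C, 0 <= C /\ forall NA : nat,
    Rabs (EAB eta rho (INR NA) (kappa NA) (INR NB) (kappa NB)
          - 2 * (1 - rho) * EB eta (INR NB) (kappa NB)) <= C * kappa NA.
Proof.
  intros [Heta [Ee Hinf]] Hk.
  assert (Hex : exists i, 0 < eta i) by (destruct (Hinf 0%nat) as [i [_ Hi]]; eauto).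
  destruct (Hk NB) as [HkB HfB].
  assert (HNB : 0 <= INR NB) by apply pos_INR.
  destruct (bounds eta (INR NB) (kappa NB) (fun i => eta i) 1 Heta Hex HNB HkB HfB
     ltac:(lra) ltac:(intros i; specialize (Heta i); lra)) as [GB [_ [_ [HqB _]]]].
  set (gB := 1 - gamma eta (INR NB) (kappa NB)) in *.
  set (Se := Series eta).
  set (c := Se / gB).
  assert (Hle : forall i, eta i <= Se) by (intros; apply term_le_Series; auto).
  assert (Hc : 0 <= c).
  { unfold c. apply Rdiv_le_0_compat; try lra. destruct Hex as [i Hi]. specialize (Hle i). lra. }
  assert (Hw : forall i, 0 <= EBi eta (INR NB) (kappa NB) i <= c * eta i).
  { intros i. unfold EBi. fold gB. specialize (HqB i). specialize (Heta i). specialize (Hle i).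
    set (q := qcoef eta (INR NB) (kappa NB) i) in *.
    split. apply Rdiv_le_0_compat; [apply Rmult_le_pos; apply pow2_ge_0 | lra].
    unfold c. replace (Se / gB * eta i) with ((Se * eta i) / gB) by (field; lra).
    unfold Rdiv. apply Rmult_le_compat_r. left; apply Rinv_0_lt_compat; lra.
    assert (q^2 <= 1) by nra. assert (eta i ^2 <= Se * eta i) by nra. nra. }
  assert (EEB : ex_series (EBi eta (INR NB) (kappa NB))).
  { apply (ex_series_le_R _ (fun i => c * eta i)); auto. now apply ex_series_scal_R. }
  split.
  - destruct Hex as [i0 Hi0].
    assert (0 < EBi eta (INR NB) (kappa NB) i0).
    { unfold EBi. fold gB. apply Rdiv_lt_0_compat; auto.
      unfold qcoef. assert (0 < kappa NB / (kappa NB + INR NB * eta i0)).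
      pose proof (Heta i0). apply Rdiv_lt_0_compat; nra. apply Rmult_lt_0_compat; apply pow_lt; auto. }
    pose proof (term_le_Series _ i0 (fun i => proj1 (Hw i)) EEB). unfold EB. lra.
  - exists ((2 * Rabs (1 - rho) + 1) * c). split.
    { pose proof (Rabs_pos (1 - rho)). nra. }
    intros NA. destruct (Hk NA) as [HkA HfA].
    assert (HNA : 0 <= INR NA) by apply pos_INR.
    destruct (bounds eta (INR NA) (kappa NA) _ c Heta Hex HNA HkA HfA Hc Hw) as [_ [[EX HX] [[EY HY] _]]].
    set (w := EBi eta (INR NB) (kappa NB)) in *.
    set (X := Series (fun i => qcoef eta (INR NA) (kappa NA) i * w i)) in *.
    set (Y := Series (fun i => qcoef eta (INR NA) (kappa NA) i ^ 2 / (1 - gamma eta (INR NA) (kappa NA)) * w i)) in *.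
    assert (E : EAB eta rho (INR NA) (kappa NA) (INR NB) (kappa NB)
              = 2 * (1 - rho) * EB eta (INR NB) (kappa NB) - 2 * (1 - rho) * X + Y).
    { unfold EAB, EB. fold w.
      rewrite (Series_ext _ (fun i => (2 * (1 - rho) * w i - 2 * (1 - rho) * (qcoef eta (INR NA) (kappa NA) i * w i)) + qcoef eta (INR NA) (kappa NA) i ^ 2 / (1 - gamma eta (INR NA) (kappa NA)) * w i)) by (intros; ring).
      rewrite Series_plus, Series_minus, !Series_scal_l.
      - unfold X, Y. ring.
      - now apply ex_series_scal_R.
      - now apply ex_series_scal_R.
      - apply ex_series_minus_R; now apply ex_series_scal_R.
      - exact EY. }
    rewrite E.
    replace (2 * (1 - rho) * EB eta (INR NB) (kappa NB) - 2 * (1 - rho) * X + Y -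
     2 * (1 - rho) * EB eta (INR NB) (kappa NB)) with (Y - 2 * (1 - rho) * X) by ring.
    eapply Rle_trans. apply Rabs_triang.
    rewrite Rabs_Ropp, Rabs_mult, Rabs_mult, (Rabs_pos_eq 2) by lra.
    rewrite (Rabs_pos_eq Y) by lra. rewrite (Rabs_pos_eq X) by lra.
    pose proof (Rabs_pos (1 - rho)). nra.
Qed.

Theorem mainTheorem7 (eta : nat -> R) (kappa : nat -> R) (rho : R) (NB : nat) :
  eta_ok eta ->
  (forall N : nat, kappa_solves eta (INR N) (kappa N)) ->
  is_lim_seq (fun NA : nat => EAB eta rho (INR NA) (kappa NA) (INR NB) (kappa NB))
             (2 * (1 - rho) * EB eta (INR NB) (kappa NB))
  /\ exists N0 : nat, forall NA : nat, (N0 <= NA)%nat ->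
       (1/2 < rho -> EAB eta rho (INR NA) (kappa NA) (INR NB) (kappa NB)
                       < EB eta (INR NB) (kappa NB)) /\
       (rho < 1/2 -> EAB eta rho (INR NA) (kappa NA) (INR NB) (kappa NB)
                       > EB eta (INR NB) (kappa NB)).
Proof.
  intros Hok Hk.
  destruct (err_bound eta kappa rho NB Hok Hk) as [HEB [C [HC HE]]].
  set (L := EB eta (INR NB) (kappa NB)) in *.
  assert (Hsmall : forall eps, 0 < eps -> exists N0, forall NA, (N0 <= NA)%nat ->
     Rabs (EAB eta rho (INR NA) (kappa NA) (INR NB) (kappa NB) - 2 * (1 - rho) * L) < eps).
  { intros eps Heps.
    destruct (kappa_small eta kappa Hok Hk (eps / (C + 1))) as [N0 HN0].
    { apply Rdiv_lt_0_compat; lra. }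
    exists N0. intros NA HNA. specialize (HN0 NA HNA). specialize (HE NA).
    assert (C * kappa NA <= C * (eps / (C + 1))) by (apply Rmult_le_compat_l; auto).
    assert (C * (eps / (C + 1)) < eps).
    {
      replace (C * (eps / (C + 1))) with (eps * (C / (C + 1))) by (field; lra).
      assert (C / (C + 1) < 1) by (apply Rlt_div_l; lra). nra. }
    lra. }
  split.
  - apply is_lim_seq_spec. intros eps.
    destruct (Hsmall eps (cond_pos eps)) as [N0 HN0]. exists N0. exact HN0.
  - destruct (Rlt_dec 0 (Rabs (1 - 2 * rho) * L)) as [Hp|Hp].
    + destruct (Hsmall _ Hp) as [N0 HN0]. exists N0. intros NA HNA.
      specialize (HN0 NA HNA).
      set (E := EAB eta rho (INR NA) (kappa NA) (INR NB) (kappa NB)) in *.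
      split; intros Hr.
      * rewrite (Rabs_left (1 - 2 * rho)) in HN0 by lra.
        pose proof (Rle_abs (E - 2 * (1 - rho) * L)). nra.
      * rewrite (Rabs_pos_eq (1 - 2 * rho)) in HN0 by lra.
        pose proof (Rle_abs (- (E - 2 * (1 - rho) * L))). rewrite Rabs_Ropp in H. unfold Rgt. nra.
    + exists 0%nat. intros NA _.
      assert (Rabs (1 - 2 * rho) <= 0).
      { pose proof (Rabs_pos (1 - 2*rho)). nra. }
      pose proof (Rle_abs (1 - 2*rho)). pose proof (Rle_abs (-(1 - 2*rho))). rewrite Rabs_Ropp in H1.
      split; intros; lra.
Qed.
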